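(* Let $\mathcal{W}$ be the weight space of an MLP with hidden dimensions $d_1,\dots,d_{L-1}$ and let $G=S_{d_1}\times\dots\times S_{d_{L-1}}$ act on $\mathcal{W}$ by the (orthonormal, linear) neuron-permutation action described in the context. Let $p(\boldsymbol{\omega})$ be a $G$-invariant prior density, and let the likelihood $p(\mathbf{Y}\mid\mathbf{X},\boldsymbol{\omega})$ of a dataset $(\mathbf{X},\mathbf{Y})$ be $G$-invariant in $\boldsymbol{\omega}$ (as holds when it depends on $\boldsymbol{\omega}$ only through the network outputs $\mathbf{f}^{\boldsymbol{\omega}}(\mathbf{x}_i)$). Let $q_\theta(\boldsymbol{\omega})$ be a variational density on $\mathcal{W}$, and define its symmetrization $q_\theta^G(\boldsymbol{\omega})=\frac{1}{|G|}\sum_{g\in G}q_\theta(g^{-1}\cdot\boldsymbol{\omega})$ and the ELBOs $$\mathcal{L}_{\mathrm{VI}}(\theta)=\mathbb{E}_{\boldsymbol{\omega}\sim q_\theta}\log p(\mathbf{Y}\mid\mathbf{X},\boldsymbol{\omega})-\mathrm{KL}(q_\theta\,\|\,p),\qquad \mathcal{L}^G_{\mathrm{VI}}(\theta)=\mathbb{E}_{\boldsymbol{\omega}\sim q^G_\theta}\log p(\mathbf{Y}\mid\mathbf{X},\boldsymbol{\omega})-\mathrm{KL}(q^G_\theta\,\|\,p).$$ Consider the joint distribution of $(g,\boldsymbol{\omega})\in G\times\mathcal{W}$ given by $q_\theta^G(g,\boldsymbol{\omega})=\frac{1}{|G|}q_\theta(g^{-1}\cdot\boldsymbol{\omega})$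 (so $g$ is uniform on $G$ and $\boldsymbol{\omega}\mid g$ has density $q_\theta(g^{-1}\cdot\boldsymbol{\omega})$), whose $\boldsymbol{\omega}$-marginal is $q^G_\theta$. Then (assuming all quantities involved are finite) $$\mathcal{L}^G_{\mathrm{VI}}(\theta)=\mathcal{L}_{\mathrm{VI}}(\theta)+H(q^G_\theta)-H(q_\theta)=\mathcal{L}_{\mathrm{VI}}(\theta)+I(g;\boldsymbol{\omega}),$$ where $H$ denotes differential entropy and $I(g;\boldsymbol{\omega})$ is the mutual information of $g$ and $\boldsymbol{\omega}$ under $q_\theta^G(g,\boldsymbol{\omega})$.
   Context: The MLP weight space is $\mathcal{W}=\bigoplus_{l=1}^L(\mathbb{R}^{d_l\times d_{l-1}}\oplus\mathbb{R}^{d_l})$ with $\boldsymbol{\omega}=(\mathbf{W}_1,\dots,\mathbf{W}_L,\mathbf{b}_1,\dots,\mathbf{b}_L)$ and Euclidean norm. For $g=(\tau_1,\dots,\tau_{L-1})\in G$ with permutation matrices $\mathbf{P}_{\tau_l}$, $g\cdot\boldsymbol{\omega}$ has $\mathbf{W}_1'=\mathbf{P}_{\tau_1}^\top\mathbf{W}_1$, $\mathbf{b}_1'=\mathbf{P}_{\tau_1}^\top\mathbf{b}_1$; $\mathbf{W}_l'=\mathbf{P}_{\tau_l}^\top\mathbf{W}_l\mathbf{P}_{\tau_{l-1}}$, $\mathbf{b}_l'=\mathbf{P}_{\tau_l}^\top\mathbf{b}_l$ for $2\le l\le L-1$; $\mathbf{W}_L'=\mathbf{W}_L\mathbf{P}_{\tau_{L-1}}$,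 $\mathbf{b}_L'=\mathbf{b}_L$. This is a linear norm-preserving action. A function or density $h$ on $\mathcal{W}$ is $G$-invariant if $h(g\cdot\boldsymbol{\omega})=h(\boldsymbol{\omega})$ for all $g\in G,\boldsymbol{\omega}\in\mathcal{W}$. All distributions have densities. *)

(* Defs.v *)
From HB Require Import structures.
From mathcomp Require Import all_boot all_order all_algebra all_fingroup.
From mathcomp Require Import all_classical all_reals all_analysis.

Set Implicit Arguments.
Unset Strict Implicit.
Unset Printing Implicit Defensive.

Import Order.TTheory GRing.Theory Num.Theory.
Local Open Scope classical_set_scope.
Local Open Scope ring_scope.

Section MLP.
Variable R : realType.
(* An MLP with L layers; d : 'I_L.+1 -> nat gives d_0 (input), d_1, ..., d_L
   (output).  Layer l : 'I_L stands for the paper's layer l+1, with weight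
   matrix of size d_(l+1) x d_l and bias of size d_(l+1). *)
Variable L : nat.
Variable d : 'I_L.+1 -> nat.

Definition lout (l : 'I_L) : 'I_L.+1 := lift ord0 l.
Definition lin (l : 'I_L) : 'I_L.+1 := widen_ord (leqnSn L) l.

(* Coordinates of the weight space: a weight entry (i,j) or a bias entry i
   of some layer. *)
Definition param := {l : 'I_L & ('I_(d (lout l)) * 'I_(d (lin l)) + 'I_(d (lout l)))%type}.

(* The weight space W = (+)_l (R^{d_l x d_(l-1)} (+) R^{d_l}), realised as
   R^#|param| (tuples carry the product Borel sigma-algebra). *)
Definition Wspace := #|{: param}|.-tuple R.

Definition coord (w : Wspace) (p : param) : R := tnth w (enum_rank p).

Definition Wmat (w : Wspace) (l : 'I_L) : 'M[R]_(d (lout l), d (lin l)) :=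
  \matrix_(i, j) coord w (Tagged _ (inl (i, j))).
Definition Bvec (w : Wspace) (l : 'I_L) : 'cV[R]_(d (lout l)) :=
  \col_i coord w (Tagged _ (inr i)).

Definition build (Wm : forall l : 'I_L, 'M[R]_(d (lout l), d (lin l)))
  (bv : forall l : 'I_L, 'cV[R]_(d (lout l))) : Wspace :=
  [tuple (match enum_val k with
          | existT l (inl ij) => Wm l ij.1 ij.2
          | existT l (inr i) => bv l i ord0
          end) | k < #|{: param}|].

(* The group G = S_(d_1) x ... x S_(d_(L-1)) is the set of those that are the
   identity at the input (m = 0) and output (m = L) layers. *)
Definition permtuple := {dffun forall m : 'I_L.+1, 'S_(d m)}.
Definition Gset : {set permtuple} :=
  [set g : permtuple | (g ord0 == 1%g) && (g ord_max == 1%g)].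

Definition ginv (g : permtuple) : permtuple := [ffun m => ((g m)^-1)%g].

(* The neuron-permutation action of the context:
   W_l' = P_(tau_l)^T W_l P_(tau_(l-1)),  b_l' = P_(tau_l)^T b_l,
   with tau_0 = tau_L = id (so W_1' = P^T W_1, W_L' = W_L P, b_L' = b_L). *)
Definition act (g : permtuple) (w : Wspace) : Wspace :=
  build (fun l => (perm_mx (g (lout l)))^T *m Wmat w l *m perm_mx (g (lin l)))
        (fun l => (perm_mx (g (lout l)))^T *m Bvec w l).

Definition G_invariant (h : Wspace -> R) :=
  forall g, g \in Gset -> forall w, h (act g w) = h w.

Definition is_lebesgue (mu : {measure set Wspace -> \bar R}) :=
  forall a b : 'I_#|{: param}| -> R, (forall k, a k <= b k) ->
    mu [set x : Wspace | forall k, a k < tnth x k <= b k] =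
    (\prod_k (b k - a k))%:E.

Section WithMeasure.
Variable mu : {measure set Wspace -> \bar R}.

Definition is_density (q : Wspace -> R) :=
  [/\ forall w, 0 <= q w, measurable_fun setT q &
      (\int[mu]_w (q w)%:E = 1)%E].

Definition symmetrize (q : Wspace -> R) (w : Wspace) : R :=
  (#|Gset|%:R)^-1 * \sum_(g in Gset) q (act (ginv g) w).

Definition joint (q : Wspace -> R) (g : permtuple) (w : Wspace) : R :=
  (#|Gset|%:R)^-1 * q (act (ginv g) w).

(* differential entropy (with 0 log 0 = 0; ln 0 = 0 in the library) *)
Definition entropy (q : Wspace -> R) : \bar R :=
  (- \int[mu]_w (q w * ln (q w))%:E)%E.

(* KL(q || p) = int q log (q/p), for q absolutely continuous wrt p *)
Definition KL (q p : Wspace -> R) : \bar R :=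
  (\int[mu]_w (q w * (ln (q w) - ln (p w)))%:E)%E.

Definition exp_loglik (q lik : Wspace -> R) : \bar R :=
  (\int[mu]_w (q w * ln (lik w))%:E)%E.

Definition ELBO (q p lik : Wspace -> R) : \bar R :=
  (exp_loglik q lik - KL q p)%E.

(* Mutual information of (g, w) under a joint density j on Gset x W
   (uniform counting on the finite set Gset times mu on W), with marginals
   j_G(g) = int j(g,w) dw and j_W(w) = sum_g j(g,w). *)
Definition margG (j : permtuple -> Wspace -> R) (g : permtuple) : R :=
  fine (\int[mu]_w (j g w)%:E).
Definition margW (j : permtuple -> Wspace -> R) (w : Wspace) : R :=
  \sum_(g in Gset) j g w.
Definition MI_integrand (j : permtuple -> Wspace -> R) g w : R :=
  j g w * (ln (j g w) - ln (margG j g * margW j w)).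
Definition mutual_info (j : permtuple -> Wspace -> R) : \bar R :=
  (\sum_(g in Gset) \int[mu]_w (MI_integrand j g w)%:E)%E.

End WithMeasure.
End MLP.

(* Main.v *)
Require Import Defs.
From HB Require Import structures.
From mathcomp Require Import all_boot all_order all_algebra all_fingroup.
From mathcomp Require Import all_classical all_reals all_analysis.
From mathcomp Require Import measurable_realfun.
From mathcomp Require Import ring lra.
Import Order.TTheory GRing.Theory Num.Theory.
Local Open Scope classical_set_scope.
Local Open Scope ring_scope.

Section U.
Variables (R : realType) (n : nat).
Definition box (a b : 'I_n -> R) : set (n.-tuple R) :=
  [set x | forall k, a k < tnth x k <= b k].
Definition boxes : set (set (n.-tuple R)) := [set A | exists a b, A = box a b].

Lemma box_measurable a b : measurable (box a b).
Proof.
pose F (k : nat) : set (n.-tuple R) := match insub k with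
  | Some i => [set x | a i < tnth x i <= b i] | None => setT end.
have -> : box a b = \bigcap_k F k.
  apply/seteqP; split => x /=.
    move=> h k _; rewrite /F; case: insubP => // i _ _; exact: h.
  move=> h k; have := h (val k) I; by rewrite /F valK.
apply: bigcapT_measurable => k; rewrite /F; case: insubP => // i _ _.
have := measurable_tnth (T:=R) i measurableT (measurable_itv `]a i, b i]).
by rewrite setTI.
Qed.

Lemma bound_tuple (x : n.-tuple R) : exists N : nat, forall k, `|tnth x k| < N%:R.
Proof.
pose S := \sum_k `|tnth x k|.
have S0 : 0 <= S by apply: sumr_ge0 => k _.
exists (Num.bound S) => k.
apply: le_lt_trans (archi_boundP S0).
by rewrite /S (bigD1 k) //= lerDl sumr_ge0.
Qed.

Lemma slab_boxes (i : 'I_n) (a b : R) :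
  <<s boxes >> ([set: n.-tuple R] `&` (fun x => tnth x i) @^-1` `]a, b]%classic).
Proof.
pose aN (N : nat) k := if k == i then a else - N%:R.
pose bN (N : nat) k := if k == i then b else N%:R.
have -> : [set: n.-tuple R] `&` (fun x => tnth x i) @^-1` `]a, b]%classic =
   \bigcup_N box (aN N) (bN N).
  apply/seteqP; split => x /=.
    move=> [_]; rewrite in_itv /= => hab.
    have [N HN] := bound_tuple x; exists N => // k.
    rewrite /aN /bN; case: eqP => [->//|_].
    by have := HN k; rewrite ltr_norml => /andP[-> /ltW ->].
  move=> [N _ h]; split => //; have := h i.
  by rewrite /aN /bN eqxx in_itv.
apply: sigma_algebra_bigcup => N; apply: sub_sigma_algebra.
by exists (aN N), (bN N).
Qed.

Lemma measurable_boxes : (measurable : set (set (n.-tuple R))) = <<s boxes >>.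
Proof.
apply/seteqP; split; last first.
  apply: smallest_sub; first exact: sigma_algebra_measurable.
  by move=> _ [a [b ->]]; exact: box_measurable.
apply: smallest_sub; first exact: smallest_sigma_algebra.
rewrite -bigcup_seq => A [i _ [B mB <-]].
have sC := sigma_algebra_image (fun x : n.-tuple R => tnth x i)
  (smallest_sigma_algebra setT boxes).
have : B \in (image_set_system setT (fun x : n.-tuple R => tnth x i) <<s boxes >>).
  apply/mem_set; move: B mB; apply: smallest_sub => //.
  move=> _ [[x y] _ <-]; exact: slab_boxes.
by rewrite inE.
Qed.

Lemma boxesI : setI_closed boxes.
Proof.
move=> _ _ [a [b ->]] [a' [b' ->]].
exists (fun k => Num.max (a k) (a' k)), (fun k => Num.min (b k) (b' k)).
apply/seteqP; split => x /=.
  move=> [h1 h2] k; move: (h1 k) (h2 k) => /andP[? ?] /andP[? ?].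
  by rewrite gt_max le_min; repeat (apply/andP; split).
move=> h; split => k; move: (h k); rewrite gt_max le_min => /andP[/andP[? ?] /andP[? ?]].
  by apply/andP. by apply/andP.
Qed.

Lemma box_empty a b k : b k < a k -> box a b = set0.
Proof.
move=> ba; apply/seteqP; split => x //= /(_ k) /andP[h1 h2].
by have := lt_le_trans h1 h2; rewrite ltNge (ltW ba).
Qed.

Lemma box_unique (m1 m2 : {measure set (n.-tuple R) -> \bar R}) :
  (forall a b, (forall k, a k <= b k) -> m1 (box a b) = (\prod_k (b k - a k))%:E) ->
  (forall a b, (forall k, a k <= b k) -> m2 (box a b) = (\prod_k (b k - a k))%:E) ->
  forall A, measurable A -> m1 A = m2 A.
Proof.
move=> h1 h2 A mA.
pose g (N : nat) := box (fun=> - N%:R) (fun=> N%:R).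
have gle N : - N%:R <= (N%:R : R) by rewrite lerNl; apply: le_trans (ler0n _ _); rewrite oppr_le0.
apply: (measure_unique boxes g) => //.
- exact: measurable_boxes.
- exact: boxesI.
- by move=> N; exists (fun=> - N%:R), (fun=> N%:R).
- apply/seteqP; split => x // _.
  have [N HN] := bound_tuple x; exists N => // k.
  by have := HN k; rewrite ltr_norml => /andP[-> /ltW ->].
- move=> _ [a [b ->]].
  have [hle|] := pselect (forall k, a k <= b k); first by rewrite h1 // h2.
  move=> /existsNP [k /negP]; rewrite -ltNge => hk.
  by rewrite (@box_empty a b k hk) !measure0.
- by move=> N; rewrite /g h1 // ltry.
Qed.
End U.
Arguments box {R n}.

Section MLPperm.
Variables (R : realType) (L : nat) (d : 'I_L.+1 -> nat).
Local Notation param := (param d).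
Local Notation Wspace := (Wspace R d).
Definition Pfam (l : 'I_L) := ('I_(d (lout l)) * 'I_(d (lin l)) + 'I_(d (lout l)))%type.

Definition pif (g : permtuple d) (p : param) : param :=
  match p with
  | existT l (inl ij) => @Tagged _ l Pfam (inl (((g (lout l))^-1)%g ij.1, ((g (lin l))^-1)%g ij.2))
  | existT l (inr i) => @Tagged _ l Pfam (inr (((g (lout l))^-1)%g i))
  end.

Lemma coord_build Wm bv (p : param) : Defs.coord (@build R L d Wm bv) p =
  match p with
  | existT l (inl ij) => Wm l ij.1 ij.2
  | existT l (inr i) => bv l i ord0
  end.
Proof. by rewrite /Defs.coord /build tnth_mktuple enum_rankK. Qed.

Lemma coord_act g (w : Wspace) p : Defs.coord (Defs.act g w) p = Defs.coord w (pif g p).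
Proof.
rewrite /Defs.act coord_build; case: p => l [[i j]|i] /=.
  have E m n (s : 'S_n) (A : 'M[R]_(m, n)) : A *m perm_mx s = col_perm s^-1 A.
    by rewrite col_permE invgK.
  rewrite tr_perm_mx -row_permE E.
  by rewrite !mxE.
by rewrite tr_perm_mx -row_permE !mxE.
Qed.

Lemma pifK g : cancel (pif (ginv g)) (pif g).
Proof.
case=> l [[i j]|i] /=; rewrite /ginv !ffunE.
  by rewrite /Tagged; do 3 f_equal; apply: (permKV ((g _)^-1)%g).
by rewrite /Tagged; do 2 f_equal; apply: (permKV ((g _)^-1)%g).
Qed.

Lemma pifK' g : cancel (pif g) (pif (ginv g)).
Proof.
case=> l [[i j]|i] /=; rewrite /ginv !ffunE.
  by rewrite /Tagged; do 3 f_equal; apply: (permK ((g _)^-1)%g).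
by rewrite /Tagged; do 2 f_equal; apply: (permK ((g _)^-1)%g).
Qed.

Local Notation N := #|{: param}|.
Definition sigf g (k : 'I_N) : 'I_N := enum_rank (pif g (enum_val k)).
Lemma sigf_inj g : injective (sigf g).
Proof.
move=> x y /enum_rank_inj /(can_inj (pifK' g)); exact: enum_val_inj.
Qed.
Definition sigp g : {perm 'I_N} := perm (@sigf_inj g).

Lemma tnth_act g (w : Wspace) k : tnth (Defs.act g w) k = tnth w (sigp g k).
Proof.
by rewrite permE /sigf -[in LHS](enum_valK k) -/(Defs.coord _ _) coord_act.
Qed.

Lemma act_measurable g : measurable_fun [set: Wspace] (Defs.act g).
Proof.
apply/measurable_fun_tnthP => k.
have -> : (fun w => tnth w k) \o Defs.act g = (fun w : Wspace => tnth w (sigp g k)).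
  by apply: funext => w /=; rewrite tnth_act.
exact: measurable_tnth.
Qed.

Lemma act_preimage_box g (a b : 'I_N -> R) :
  Defs.act g @^-1` (box a b) = box (fun j => a ((sigp g)^-1 j)%g) (fun j => b ((sigp g)^-1 j)%g).
Proof.
apply/seteqP; split => w /= h k.
  by have := h ((sigp g)^-1 k)%g; rewrite tnth_act permKV.
by rewrite tnth_act; have := h (sigp g k); rewrite permK.
Qed.

Lemma act_preserves (mu : {measure set Wspace -> \bar R}) g :
  is_lebesgue mu -> forall A, measurable A -> pushforward mu (Defs.act g) A = mu A.
Proof.
move=> hmu; apply: box_unique => //; first exact: act_measurable.
move=> ? a b hab; change (mu (Defs.act g @^-1` box a b) = (\prod_k (b k - a k))%:E).
rewrite act_preimage_box hmu; last by move=> k; exact: hab.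
by congr (_%:E); rewrite [RHS](reindex_inj (@perm_inj _ ((sigp g)^-1)%g)).
Qed.

Lemma integral_act (mu : {measure set Wspace -> \bar R}) g (f : Wspace -> R) :
  is_lebesgue mu -> measurable_fun setT f -> mu.-integrable setT (EFin \o f) ->
  mu.-integrable setT (fun w => (f (Defs.act g w))%:E) /\
  (\int[mu]_w (f (Defs.act g w))%:E = \int[mu]_w (f w)%:E)%E.
Proof.
move=> hmu mf intf.
have mA := act_measurable g.
have mEf : measurable_fun [set: Wspace] (fun w => (f w)%:E) by apply/measurable_EFinP.
have eqm : forall A, measurable A -> A `<=` setT ->
    mu A = pushforward mu (Defs.act g) A.
  by move=> A mA' _; rewrite act_preserves.
have int1 : mu.-integrable setT (fun w => (f (Defs.act g w))%:E).
  apply/integrableP; split.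
    by apply/measurable_EFinP; exact: (measurableT_comp mf mA).
  have := integrableP _ _ _ intf => -[_].
  rewrite (eq_measure_integral (pushforward mu (Defs.act g)) eqm).
  rewrite ge0_integral_pushforward //; last first.
  - exact: measurableT_comp.
split => //.
rewrite [RHS](eq_measure_integral (pushforward mu (Defs.act g)) eqm).
rewrite [RHS]integral_pushforward //; rewrite ?preimage_setT //.
Qed.
End MLPperm.

Section Main.
Variables (R : realType) (L : nat) (d : 'I_L.+1 -> nat).
Local Notation Wspace := (Wspace R d).
Variable mu : {measure set Wspace -> \bar R}.
Hypothesis hmu : is_lebesgue mu.
Local Notation G := (Gset d).
Local Notation c := ((#|G|%:R : R)^-1).

Lemma one_in_G : ([ffun m => 1%g] : permtuple d) \in G.
Proof. by rewrite /Gset inE !ffunE !eqxx. Qed.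

Lemma cardG_gt0 : (0 < #|G|)%N.
Proof. by apply/card_gt0P; exists [ffun m => 1%g]; exact: one_in_G. Qed.

Lemma cG : c * #|G|%:R = 1.
Proof. by rewrite mulVf // pnatr_eq0 -lt0n cardG_gt0. Qed.

Lemma c_gt0 : 0 < c.
Proof. by rewrite invr_gt0 ltr0n cardG_gt0. Qed.

Lemma ginv_G g : g \in G -> ginv g \in G.
Proof.
rewrite /Gset !inE /ginv !ffunE => /andP[/eqP -> /eqP ->].
by rewrite !invg1 !eqxx.
Qed.

Lemma inv_act (h : Wspace -> R) : G_invariant h ->
  forall g, g \in G -> forall w, h (Defs.act (ginv g) w) = h w.
Proof. by move=> hi g gG w; apply: hi; exact: ginv_G. Qed.

Lemma fin_ex (x : \bar R) : x \is a fin_num -> exists r : R, x = r%:E.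
Proof. by move=> h; exists (fine x); rewrite fineK. Qed.

Lemma int_act g (F : Wspace -> R) : mu.-integrable setT (EFin \o F) ->
  mu.-integrable setT (fun w => (F (Defs.act g w))%:E) /\
  (\int[mu]_w (F (Defs.act g w))%:E = \int[mu]_w (F w)%:E)%E.
Proof.
move=> iF; apply: integral_act => //.
by apply/measurable_EFinP; exact: (measurable_int _ iF).
Qed.

Lemma sym_int (F : Wspace -> R) : mu.-integrable setT (EFin \o F) ->
  mu.-integrable setT (fun w => (c * \sum_(g in G) F (Defs.act (ginv g) w))%:E) /\
  (\int[mu]_w (c * \sum_(g in G) F (Defs.act (ginv g) w))%:E = \int[mu]_w (F w)%:E)%E.
Proof.
move=> iF.
have E : (fun w => (c * \sum_(g in G) F (Defs.act (ginv g) w))%:E) =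
    (fun w => \sum_(g in G) (c * F (Defs.act (ginv g) w))%:E)%E.
  by apply: funext => w; rewrite mulr_sumr sumEFin.
have ig n : mu.-integrable setT (fun w => (c * F (Defs.act (ginv n) w))%:E).
  have := integrableZl measurableT c (int_act (ginv n) F iF).1.
  by apply: eq_integrable => // w _; rewrite EFinM.
have Ig n : (\int[mu]_w (c * F (Defs.act (ginv n) w))%:E =
             c%:E * \int[mu]_w (F w)%:E)%E.
  rewrite -(int_act (ginv n) F iF).2 -integralZl //; first exact: (int_act (ginv n) F iF).1.
rewrite E; split; first by apply: integrable_sum => // n _; exact: ig.
rewrite integral_sum //.
under eq_bigr do rewrite Ig.
have [r Er0] := fin_ex _ (integrable_fin_num measurableT iF).
have -> : (\int[mu]_w (F w)%:E = r%:E)%E by exact: Er0.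
rewrite -EFinM sumEFin sumr_const; congr (_%:E).
by rewrite -(mulr_natr (_ * r)) mulrAC cG mul1r.
Qed.
End Main.
Arguments inv_act {R L d h}.
Arguments sym_int {R L d mu} hmu {F}.
Arguments fin_ex {R x}.
Arguments c_gt0 {R L d}.
Arguments int_act {R L d mu} hmu g {F}.
Arguments cG {R L d}.


Theorem theorem4p1 (R : realType) (L : nat) (d : 'I_L.+1 -> nat)
    (mu : {measure set (Wspace R d) -> \bar R})
    (p lik q : Wspace R d -> R) :
  is_lebesgue mu ->
  is_density mu p -> G_invariant p ->
  (forall w, 0 <= lik w) -> measurable_fun setT lik -> G_invariant lik ->
  is_density mu q ->
  (* finiteness of all quantities involved *)
  {ae mu, forall w, 0 < q w -> 0 < p w} ->
  {ae mu, forall w, 0 < q w -> 0 < lik w} ->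
  mu.-integrable setT (fun w => (q w * ln (lik w))%:E) ->
  mu.-integrable setT (fun w => (symmetrize q w * ln (lik w))%:E) ->
  mu.-integrable setT (fun w => (q w * (ln (q w) - ln (p w)))%:E) ->
  mu.-integrable setT
    (fun w => (symmetrize q w * (ln (symmetrize q w) - ln (p w)))%:E) ->
  mu.-integrable setT (fun w => (q w * ln (q w))%:E) ->
  mu.-integrable setT (fun w => (symmetrize q w * ln (symmetrize q w))%:E) ->
  (forall g, g \in Gset d ->
     mu.-integrable setT (fun w => (MI_integrand mu (joint q) g w)%:E)) ->
  ELBO mu (symmetrize q) p lik =
    (ELBO mu q p lik + (entropy mu (symmetrize q) - entropy mu q))%E /\
  ELBO mu (symmetrize q) p lik =
    (ELBO mu q p lik + mutual_info mu (joint q))%E.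
Proof.
move=> hmu [p0 mp ip1] pinv lik0 mlik likinv [q0 mq iq1] _ _ iqlik iqGlik
  iKL iKLG iqq iqGqG iMI.
set c := ((#|Gset d|%:R : R)^-1).
set qG := symmetrize q.
have c0 : 0 < c by exact: c_gt0.
have iq : mu.-integrable setT (EFin \o q).
  apply/integrableP; split; first exact/measurable_EFinP.
  under eq_integral do rewrite gee0_abs ?lee_fin //.
  by rewrite iq1 ltry.
have iqlp : mu.-integrable setT (fun w => (q w * ln (p w))%:E).
  apply: eq_integrable (integrableB measurableT iqq iKL) => // w _ /=.
  by rewrite -EFinB; congr (_%:E); ring.
have iqGlp : mu.-integrable setT (fun w => (qG w * ln (p w))%:E).
  apply: eq_integrable (integrableB measurableT iqGqG iKLG) => // w _ /=.
  by rewrite -EFinB /qG; congr (_%:E); ring.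
have symE (h : Wspace R d -> R) : G_invariant h -> forall w,
    qG w * ln (h w) = c * \sum_(g in Gset d)
      (fun v => q v * ln (h v)) (Defs.act (ginv g) w).
  move=> hi w; rewrite /qG /symmetrize -mulrA mulr_suml; congr (_ * _).
  by apply: eq_bigr => g gG /=; rewrite (inv_act hi g gG).
have Alik : (\int[mu]_w (qG w * ln (lik w))%:E = \int[mu]_w (q w * ln (lik w))%:E)%E.
  rewrite -(sym_int hmu iqlik).2; apply: eq_integral => w _.
  by rewrite symE.
have Ap : (\int[mu]_w (qG w * ln (p w))%:E = \int[mu]_w (q w * ln (p w))%:E)%E.
  rewrite -(sym_int hmu iqlp).2; apply: eq_integral => w _.
  by rewrite symE.
have [a1 Ea1] := fin_ex (integrable_fin_num measurableT iqlik).
have [e1 Ee1] := fin_ex (integrable_fin_num measurableT iqq).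
have [e2 Ee2] := fin_ex (integrable_fin_num measurableT iqGqG).
have [p1 Ep1] := fin_ex (integrable_fin_num measurableT iqlp).
have KLsplit (r : Wspace R d -> R) :
    mu.-integrable setT (fun w => (r w * ln (r w))%:E) ->
    mu.-integrable setT (fun w => (r w * ln (p w))%:E) ->
    KL mu r p = (\int[mu]_w (r w * ln (r w))%:E - \int[mu]_w (r w * ln (p w))%:E)%E.
  move=> i1 i2; rewrite /KL -integralB_EFin //.
  by apply: eq_integral => w _; rewrite -EFinB; congr (_%:E); ring.
have ELq : ELBO mu q p lik = (a1 - (e1 - p1))%:E.
  by rewrite /ELBO /exp_loglik KLsplit // Ea1 Ee1 Ep1 EFinB EFinB.
have ELqG : ELBO mu qG p lik = (a1 - (e2 - p1))%:E.
  by rewrite /ELBO /exp_loglik KLsplit // Alik Ap Ea1 Ee2 Ep1 EFinB EFinB.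
have Hq : entropy mu q = (- e1)%:E by rewrite /entropy Ee1.
have HqG : entropy mu qG = (- e2)%:E by rewrite /entropy Ee2.
suff MI : mutual_info mu (joint q) = (e1 - e2)%:E.
  rewrite ELq ELqG Hq HqG MI -EFinB -!EFinD; split; congr (_%:E); ring.
have margGE g : margG mu (joint q) g = c.
  rewrite /margG /joint.
  under eq_integral do rewrite EFinM.
  rewrite integralZl //; last exact: (int_act hmu (ginv g) iq).1.
  by rewrite (int_act hmu (ginv g) iq).2 iq1 mule1.
have margWE w : margW (joint q) w = qG w.
  by rewrite /margW /joint /qG /symmetrize mulr_sumr.
have qGge g w : g \in Gset d -> c * q (Defs.act (ginv g) w) <= qG w.
  move=> gG; rewrite /qG /symmetrize; apply: ler_wpM2l; first exact: ltW.
  by rewrite (bigD1 g) //= lerDl sumr_ge0.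
have MIE g w : g \in Gset d -> MI_integrand mu (joint q) g w =
    c * (q (Defs.act (ginv g) w) * ln (q (Defs.act (ginv g) w))) -
    c * (q (Defs.act (ginv g) w) * ln (qG w)).
  move=> gG; rewrite /MI_integrand margGE margWE /joint.
  have := qGge g w gG.
  set a := q (Defs.act (ginv g) w).
  have a0 : 0 <= a := q0 _.
  rewrite le_eqVlt in a0; case/orP: a0 => [/eqP <-|apos] h.
    by rewrite !(mulr0, mul0r) subrr.
  have sG : 0 < qG w by apply: lt_le_trans h; exact: mulr_gt0.
  rewrite -/c (lnM (x:=c) (y:=a)) ?posrE // (lnM (x:=c) (y:=qG w)) ?posrE //.
  ring.
pose A g w := c * (q (Defs.act (ginv g) w) * ln (q (Defs.act (ginv g) w))).
pose B g w := c * (q (Defs.act (ginv g) w) * ln (qG w)).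
have iA g : mu.-integrable setT (fun w => (A g w)%:E).
  have := integrableZl measurableT c (int_act hmu (ginv g) iqq).1.
  by apply: eq_integrable => // w _; rewrite EFinM.
have IA g : (\int[mu]_w (A g w)%:E = (c * e1)%:E)%E.
  rewrite /A; under eq_integral do rewrite EFinM.
  rewrite integralZl //; last exact: (int_act hmu (ginv g) iqq).1.
  by rewrite (int_act hmu (ginv g) iqq).2 Ee1 EFinM.
pose B' g w := if g \in Gset d then B g w else 0.
have iB' g : mu.-integrable setT (fun w => (B' g w)%:E).
  case: (boolP (g \in Gset d)) => gG; last first.
    by apply: eq_integrable (integrable0 mu setT) => // w _; rewrite /B' (negbTE gG).
  apply: eq_integrable (integrableB measurableT (iA g) (iMI g gG)) => // w _ /=.
  by rewrite /B' gG -EFinB MIE // /A /B; congr (_%:E); ring.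
have IMI g : g \in Gset d -> (\int[mu]_w (MI_integrand mu (joint q) g w)%:E =
    (c * e1)%:E - \int[mu]_w (B' g w)%:E)%E.
  move=> gG; rewrite -(IA g) -integralB_EFin //; first last.
  - exact: (iB' g).
  - exact: (iA g).
  apply: eq_integral => w _; rewrite MIE // /B' gG -EFinB.
  by congr (_%:E).
have SB : (\sum_(g in Gset d) \int[mu]_w (B' g w)%:E = e2%:E)%E.
  rewrite -integral_sum // -Ee2; apply: eq_integral => w _.
  rewrite sumEFin; congr (_%:E).
  rewrite (eq_bigr (fun g => c * q (Defs.act (ginv g) w) * ln (qG w))); last first.
    by move=> h hG; rewrite /B' hG /B mulrA.
  by rewrite -mulr_suml -mulr_sumr.
have bfin g : exists b : R, (\int[mu]_w (B' g w)%:E = b%:E)%E.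
  exact: fin_ex (integrable_fin_num measurableT (iB' g)).
pose b g := fine (\int[mu]_w (B' g w)%:E)%E.
have Eb g : (\int[mu]_w (B' g w)%:E = (b g)%:E)%E.
  by have [r Er] := bfin g; rewrite /b Er.
rewrite /mutual_info.
rewrite (eq_bigr (fun g => ((c * e1) - b g)%:E)); last first.
  by move=> g gG; rewrite IMI // Eb EFinB.
have SB' : (\sum_(g in Gset d) (b g)%:E = e2%:E)%E.
  by rewrite -SB; apply: eq_bigr => g _; rewrite Eb.
move: SB'; rewrite !sumEFin => SB1; have SB2 := EFin_inj SB1; congr (_%:E).
rewrite sumrB SB2 sumr_const -(mulr_natr (c * e1)) mulrAC cG mul1r //.
Qed.
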